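(* Let $q\ge2$ and let $b,c$ be positive integers. Then either there is no $(b,c)$-coloring of $H(n,q)$ for any positive integer $n$, or there exists $n_0=n_0(b,c;q)$ such that a $(b,c)$-coloring of $H(n,q)$ exists if and only if $n\ge n_0$.
   Context: The Hamming graph $H(n,q)$ has vertex set $\mathbb{Z}_q^n$, two vertices adjacent iff they differ in exactly one coordinate. A $(b,c)$-coloring of $H(n,q)$ is a surjective map onto $\{1,2\}$ in which each color-1 vertex has exactly $b$ neighbours of color 2 and each color-2 vertex has exactly $c$ neighbours of color 1. *)

(* Defs.v *)
From mathcomp Require Import all_boot.
Set Implicit Arguments. Unset Strict Implicit. Unset Printing Implicit Defensive.

Definition hvertex (n q : nat) := {ffun 'I_n -> 'I_q}.

Definition hdist (n q : nat) (x y : hvertex n q) : nat := #|[pred i | x i != y i]|.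

Definition hadj (n q : nat) (x y : hvertex n q) : bool := hdist x y == 1.

Definition color1 : 'I_2 := ord0.
Definition color2 : 'I_2 := ord_max.

Definition is_bc_coloring (n q b c : nat) (f : hvertex n q -> 'I_2) : Prop :=
  (forall k : 'I_2, exists x, f x = k) /\
  (forall x, f x = color1 -> #|[pred y | hadj x y && (f y == color2)]| = b) /\
  (forall x, f x = color2 -> #|[pred y | hadj x y && (f y == color1)]| = c).

Definition has_bc_coloring (n q b c : nat) : Prop :=
  exists f : hvertex n q -> 'I_2, is_bc_coloring b c f.

(* Main.v *)
Require Import Defs.
From mathcomp Require Import all_boot.
From Stdlib Require Import ClassicalEpsilon.

Section Ext.
Variables (n q : nat).

Definition rr (x : hvertex n.+1 q) : hvertex n q :=
  [ffun i : 'I_n => x (widen_ord (leqnSn n) i)].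

Definition ext (z : hvertex n q) (a : 'I_q) : hvertex n.+1 q :=
  [ffun i : 'I_n.+1 => if @insub nat (fun k => k < n) 'I_n (val i) is Some j then z j else a].

Lemma rrK z a : rr (ext z a) = z.
Proof. by apply/ffunP=> j; rewrite !ffunE /= valK. Qed.

Lemma ext_last z a : ext z a ord_max = a.
Proof. by rewrite ffunE insubF //= ltnn. Qed.

Lemma extK y : ext (rr y) (y ord_max) = y.
Proof.
apply/ffunP=> i; rewrite ffunE; case: insubP => [j _ eji | ge].
  by rewrite ffunE; congr (y _); apply: val_inj.
congr (y _); apply: val_inj => /=; have := ltn_ord i.
by rewrite ltnS => le; apply/eqP; rewrite eqn_leq le leqNgt ge.
Qed.

Lemma ext_inj a : injective (fun z => ext z a).
Proof. by move=> z1 z2 /= h; rewrite -(rrK z1 a) h rrK. Qed.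

Lemma card_sum m (P : pred 'I_m) : #|P| = \sum_(i < m) P i.
Proof.
rewrite -sum1_card big_mkcond /=; apply: eq_bigr => i _.
by rewrite unfold_in; case: (P i).
Qed.

Lemma hdistS x y :
  hdist x y = hdist (rr x) (rr y) + (x ord_max != y ord_max).
Proof.
rewrite /hdist !card_sum big_ord_recr /=; congr (_ + _).
by apply: eq_bigr => i _; rewrite !ffunE.
Qed.

Lemma hdist0 (u v : hvertex n q) : hdist u v = 0 -> u = v.
Proof.
move=> h; apply/ffunP=> i; move: h; rewrite /hdist => /card0_eq /(_ i).
by rewrite !inE => /negbFE/eqP.
Qed.

Lemma count_ext (f : hvertex n q -> 'I_2) (col : 'I_2) x :
  f (rr x) != col ->
  #|[pred y | hadj x y && (f (rr y) == col)]| =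
  #|[pred z | hadj (rr x) z && (f z == col)]|.
Proof.
move=> hx.
rewrite -(card_imset [pred z | hadj (rr x) z && (f z == col)] (ext_inj (x ord_max))).
apply: eq_card => y; rewrite !inE.
apply/idP/imsetP.
  case/andP => hxy hy.
  case: (eqVneq (x ord_max) (y ord_max)) => e.
    exists (rr y); last by rewrite e extK.
    by rewrite inE /= hy andbT; move: hxy; rewrite /hadj hdistS e eqxx addn0.
  move: hxy; rewrite /hadj hdistS e addn1 eqSS => /eqP/hdist0 h.
  by move: hy hx; rewrite h => ->.
case=> z; rewrite inE /= => /andP [hz fz] ->.
by rewrite rrK fz andbT /hadj hdistS rrK ext_last eqxx addn0.
Qed.

Lemma has_succ b c : 0 < q -> has_bc_coloring n q b c -> has_bc_coloring n.+1 q b c.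
Proof.
move=> q0 [f [surj [h1 h2]]]; exists (fun y => f (rr y)); split; [|split].
- move=> k; have [x fx] := surj k; exists (ext x (Ordinal q0)); by rewrite rrK.
- move=> x fx; rewrite count_ext ?fx //; exact: h1.
- move=> x fx; rewrite count_ext ?fx //; exact: h2.
Qed.
End Ext.

Theorem proposition10 (q b c : nat) :
  2 <= q -> 0 < b -> 0 < c ->
  (forall n : nat, 0 < n -> ~ has_bc_coloring n q b c) \/
  (exists n0 : nat, forall n : nat, 0 < n -> (has_bc_coloring n q b c <-> n0 <= n)).
Proof.
move=> q2 _ _; have q0 : 0 < q by apply: leq_trans q2.
have up : forall n m, n <= m -> has_bc_coloring n q b c -> has_bc_coloring m q b c.
  move=> n m /subnK <-; elim: (m - n) => [//|k IH] h.
  by rewrite addSn; apply: has_succ => //; apply: IH.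
pose P n := if excluded_middle_informative (0 < n /\ has_bc_coloring n q b c)
            then true else false.
have PE n : P n <-> (0 < n /\ has_bc_coloring n q b c).
  by rewrite /P; case: excluded_middle_informative.
case: (excluded_middle_informative (exists n, P n)) => [ex|nex]; last first.
  left=> n n0 h; apply: nex; exists n; exact/PE.
right; case: (ex_minnP ex) => m /PE [m0 hm] mmin; exists m => n n0; split.
  by move=> h; apply: mmin; apply/PE.
by move=> le; apply: up le hm.
Qed.
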